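(* For any positive increasing function $\phi$ with $\phi(X)\to\infty$ as $X\to\infty$, there exists a set $A\subset\mathbb{N}$ such that the set $A^2+A$ has density $1$ and $$\liminf_{X\to\infty} \frac{A(X)}{(X\phi(X))^{1/3}}<\infty.$$
   Context: $\mathbb{N}$ is the set of positive integers. $A^2=\{ab: a,b\in A\}$, $A^2+A=\{x+y: x\in A^2, y\in A\}$. For a set $S$ of nonnegative integers, $S(X)=|S\cap[1,X]|$; $S$ has density $1$ if $\lim_{X\to\infty} S(X)/X = 1$. *)

(* Defs.v *)
From Stdlib Require Import Reals Lra Lia ZArith ClassicalEpsilon.
From Coquelicot Require Import Coquelicot.
Open Scope R_scope.

Definition prodset (A : nat -> Prop) : nat -> Prop :=
  fun n => exists a b, A a /\ A b /\ n = (a * b)%nat.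

Definition prodsumset (A : nat -> Prop) : nat -> Prop :=
  fun n => exists x y, prodset A x /\ A y /\ n = (x + y)%nat.

Fixpoint count_upto (S : nat -> Prop) (N : nat) : nat :=
  match N with
  | O => O
  | Datatypes.S k => (count_upto S k +
             (if excluded_middle_informative (S (Datatypes.S k)) then 1 else 0))%nat
  end.

Definition counting (S : nat -> Prop) (X : R) : R :=
  INR (count_upto S (Z.to_nat (Int_part X))).

Definition has_density_one (S : nat -> Prop) : Prop :=
  is_lim (fun X => counting S X / X) p_infty 1.

(* Main.v *)
Require Import Defs.
From Stdlib Require Import Reals Lra Lia ZArith ClassicalEpsilon.
From Coquelicot Require Import Coquelicot.
Open Scope R_scope.

Lemma cover (A : nat -> Prop) c0 K M t :
  (1 <= K)%nat -> (1 <= M)%nat ->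
  (forall a, (K <= a <= 2*K)%nat -> A a) ->
  (forall c, (c0 < c <= c0 + 2*K)%nat -> A c) ->
  (forall b, (M <= b)%nat -> (K*(b-M) < M)%nat -> A b) ->
  (c0 + K*M < t <= c0 + 2*K*M)%nat -> prodsumset A t.
Proof.
  intros HK HM Ha Hc Hb Ht.
  set (s := (t - c0 - 1)%nat).
  assert (Hs1 : (K*M <= s)%nat) by (unfold s; lia).
  assert (Hs2 : (s < 2*K*M)%nat) by (unfold s; lia).
  set (a := (s / M)%nat).
  pose proof (Nat.div_mod s M ltac:(lia)) as Ed.
  pose proof (Nat.mod_upper_bound s M ltac:(lia)) as Em.
  fold a in Ed.
  assert (HaM : (a*M <= s < (a+1)*M)%nat) by nia.
  assert (Ka : (K <= a)%nat).
  { destruct (Nat.le_gt_cases K a) as [h|h]; [exact h|].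
    exfalso. assert ((a+1)*M <= K*M)%nat by (apply Nat.mul_le_mono_r; lia). lia. }
  assert (aK : (a < 2*K)%nat).
  { destruct (Nat.le_gt_cases (2*K) a) as [h|h]; [|exact h].
    exfalso. assert (2*K*M <= a*M)%nat by (apply Nat.mul_le_mono_r; lia). lia. }
  set (b := (s / a)%nat). set (r := (s mod a)%nat).
  pose proof (Nat.div_mod s a ltac:(lia)) as Ed2.
  pose proof (Nat.mod_upper_bound s a ltac:(lia)) as Em2.
  fold b r in Ed2, Em2.
  assert (Mb : (M <= b)%nat).
  { destruct (Nat.le_gt_cases M b) as [h|h]; [exact h|].
    exfalso. assert (a*(b+1) <= a*M)%nat by (apply Nat.mul_le_mono_l; lia). nia. }
  assert (Kb : (K*(b-M) < M)%nat).
  { assert (K*(b-M) <= a*(b-M))%nat by (apply Nat.mul_le_mono_r; lia).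
    assert (a*(b-M) = a*b - a*M)%nat by nia. lia. }
  exists (a*b)%nat, (c0 + 1 + r)%nat. split; [|split].
  - exists a, b. split; [apply Ha; lia|]. split; [apply Hb; assumption|reflexivity].
  - apply Hc. lia.
  - unfold s in Ed2. lia.
Qed.
Close Scope R_scope.

Fixpoint ee (k : nat) : nat := match k with O => 4 | S k' => 6 * ee k' + 2 end.
Definition KK (k : nat) : nat := 2 ^ ee k.
Definition WW (k : nat) : nat := match k with O => 2 | S k' => KK k' ^ 3 end.
Definition Aset (n : nat) : Prop :=
  n = 1%nat \/ exists k, ((WW k < n <= 4 * KK k)%nat \/
     exists j, (j <= ee k)%nat /\ (KK k * 2^j <= n < KK k * 2^j + 2^j)%nat).

Lemma KK_S k : KK (S k) = (4 * (KK k)^6)%nat.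
Proof. unfold KK; change (ee (S k)) with (6 * ee k + 2)%nat. rewrite Nat.pow_add_r, (Nat.mul_comm 6), Nat.pow_mul_r. simpl (2^2)%nat. lia. Qed.

Lemma KK_ge k : (16 <= KK k)%nat.
Proof. induction k. reflexivity. rewrite KK_S. pose proof (Nat.pow_le_mono_r (KK k) 1 6 ltac:(lia) ltac:(lia)). rewrite Nat.pow_1_r in *. lia. Qed.

Lemma stage_props k : (2 <= WW k)%nat /\ (WW k + (WW k + 1)^2 <= 4 * KK k + 1)%nat
   /\ (WW k < KK k)%nat.
Proof.
  destruct k as [|k].
  - unfold WW, KK; simpl. lia.
  - change (WW (S k)) with (KK k ^ 3)%nat. rewrite KK_S. pose proof (KK_ge k). set (x := KK k) in *.
    replace (x^6)%nat with (x^3*x^3)%nat by (rewrite <- Nat.pow_add_r; reflexivity).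
    assert (x <= x^3)%nat by (pose proof (Nat.pow_le_mono_r x 1 3 ltac:(lia) ltac:(lia)); rewrite Nat.pow_1_r in *; lia).
    set (y := (x^3)%nat) in *. rewrite Nat.pow_2_r. split; [lia|split]; nia.
Qed.

Section Stage.
Variable k : nat.
Let W := WW k.
Let K := KK k.

Lemma A_J n : (W < n <= 4*K)%nat -> Aset n.
Proof. intros H. right. exists k. left. exact H. Qed.

Lemma part2 d : forall t, (W + (W+1)^2 < t <= W + 2*(W+1+d)^2)%nat ->
  (W+1+d <= K)%nat -> prodsumset Aset t.
Proof.
  destruct (stage_props k) as [h1 [h2 h3]]. fold W K in h1, h2, h3.
  rewrite !Nat.pow_2_r in *.
  induction d; intros t Ht Hd; rewrite ?Nat.pow_2_r in *.
  - apply (cover Aset W (W+1) (W+1)).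
    + lia.
    + lia.
    + intros; apply A_J; lia.
    + intros; apply A_J; lia.
    + intros b Hb1 Hb2. apply A_J. nia.
    + nia.
  - destruct (Nat.le_gt_cases t (W + 2*((W+1+d)*(W+1+d)))) as [h|h].
    + apply IHd; lia.
    + apply (cover Aset W (W+1+S d) (W+1+S d)).
      * lia.
      * lia.
      * intros; apply A_J; lia.
      * intros; apply A_J; lia.
      * intros b Hb1 Hb2. apply A_J. nia.
      * nia.
Qed.

Lemma part3 j : (j <= ee k)%nat -> forall t, (W + K*K < t <= W + K*K*2^(S j))%nat ->
  prodsumset Aset t.
Proof.
  destruct (stage_props k) as [h1 [h2 h3]]. fold W K in h1, h2, h3.
  pose proof (KK_ge k) as h4. fold K in h4.
  induction j as [|j IHj]; intros Hj t Ht.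
  - apply (cover Aset W K (K*2^0)).
    + lia.
    + rewrite Nat.pow_0_r. lia.
    + intros; apply A_J; lia.
    + intros; apply A_J; lia.
    + intros b Hb1 Hb2. right. exists k. right. exists 0%nat. split; [lia|].
      fold K. rewrite Nat.pow_0_r in *.
      assert (b - K*1 < 1)%nat by (apply (Nat.mul_lt_mono_pos_l K); lia). lia.
    + rewrite Nat.pow_0_r. rewrite Nat.pow_1_r in Ht. lia.
  - destruct (Nat.le_gt_cases t (W + K*K*2^(S j))) as [h|h].
    + apply IHj; lia.
    + pose proof (Nat.pow_nonzero 2 (S j) ltac:(lia)).
      assert (E : (2^(S (S j)) = 2 * 2^(S j))%nat) by reflexivity.
      set (p := (2^(S j))%nat) in *.
      apply (cover Aset W K (K*p)).
      * lia.
      * nia.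
      * intros; apply A_J; lia.
      * intros; apply A_J; lia.
      * intros b Hb1 Hb2. right. exists k. right. exists (S j). split; [lia|].
        fold K p. split; [lia|].
        assert (b - K*p < p)%nat by (apply (Nat.mul_lt_mono_pos_l K); lia).
        lia.
      * rewrite E in Ht. nia.
Qed.

Lemma stage_cover t : (W + 1 < t <= WW (S k) + 1)%nat -> prodsumset Aset t.
Proof.
  destruct (stage_props k) as [h1 [h2 h3]]. fold W K in h1, h2, h3.
  pose proof (KK_ge k) as h4. fold K in h4.
  intros Ht. change (WW (S k)) with (KK k ^ 3)%nat in Ht. fold K in Ht.
  replace (K^3)%nat with (K*K*K)%nat in Ht by (simpl; lia).
  destruct (Nat.le_gt_cases t (4*K+1)) as [c1|c1].
  { exists 1%nat, (t-1)%nat. split; [|split].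
    - exists 1%nat, 1%nat. split; [left; reflexivity|]. split; [left; reflexivity|]. reflexivity.
    - apply A_J; lia.
    - lia. }
  destruct (Nat.le_gt_cases t (W + K*K)) as [c2|c2].
  { apply (part2 (K - W - 1)); [|lia].
    replace (W+1+(K-W-1))%nat with K by lia. rewrite !Nat.pow_2_r in *. nia. }
  apply (part3 (ee k)); [lia|]. split; [lia|].
  replace (2^S (ee k))%nat with (2*K)%nat by (unfold K, KK; simpl; lia).
  nia.
Qed.
End Stage.

Lemma KK_mono k : (KK k < KK (S k))%nat.
Proof.
  rewrite KK_S. pose proof (KK_ge k).
  pose proof (Nat.pow_le_mono_r (KK k) 1 6 ltac:(lia) ltac:(lia)). rewrite Nat.pow_1_r in *. lia.
Qed.

Lemma KK_lin k : (k <= KK k)%nat.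
Proof. induction k. lia. pose proof (KK_mono k). lia. Qed.

Lemma K3 k : (KK k ^ 3 = KK k * KK k * KK k)%nat.
Proof. simpl. lia. Qed.

Lemma WW_S k : WW (S k) = (KK k * KK k * KK k)%nat.
Proof. change (WW (S k)) with (KK k ^ 3)%nat. apply K3. Qed.

Lemma WW_step k : (WW k < WW (S k))%nat.
Proof.
  destruct (stage_props k) as [h1 [h2 h3]]. rewrite WW_S. pose proof (KK_ge k). nia.
Qed.

Lemma WW_mono k k' : (k <= k')%nat -> (WW k <= WW k')%nat.
Proof.
  induction 1. lia. pose proof (WW_step m). lia.
Qed.

Lemma cover_upto k : forall t, (3 < t <= WW (S k) + 1)%nat -> prodsumset Aset t.
Proof.
  induction k; intros t Ht.
  - apply (stage_cover 0). simpl WW at 1. lia.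
  - destruct (Nat.le_gt_cases t (WW (S k) + 1)) as [h|h].
    + apply IHk; lia.
    + apply (stage_cover (S k)). lia.
Qed.

Lemma cover_all t : (3 < t)%nat -> prodsumset Aset t.
Proof.
  intros Ht. apply (cover_upto t). split; [lia|].
  rewrite WW_S. pose proof (KK_lin t). pose proof (KK_ge t). nia.
Qed.

Lemma Aset_pos n : Aset n -> (1 <= n)%nat.
Proof.
  intros [H|[k [H|[j [Hj H]]]]]; [lia|lia|].
  pose proof (KK_ge k). pose proof (Nat.pow_nonzero 2 j ltac:(lia)). nia.
Qed.

Lemma stage_elems k n : ((WW k < n <= 4 * KK k)%nat \/
     exists j, (j <= ee k)%nat /\ (KK k * 2^j <= n < KK k * 2^j + 2^j)%nat) ->
     (WW k < n <= WW (S k))%nat.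
Proof.
  destruct (stage_props k) as [h1 [h2 h3]]. pose proof (KK_ge k) as h4.
  rewrite WW_S. intros [H|[j [Hj H]]].
  - nia.
  - assert (Hp : (2^j <= KK k)%nat) by (unfold KK; apply Nat.pow_le_mono_r; lia).
    pose proof (Nat.pow_nonzero 2 j ltac:(lia)).
    split; [nia|].
    assert (KK k * 2^j <= KK k * KK k)%nat by (apply Nat.mul_le_mono_l; exact Hp).
    nia.
Qed.

Lemma count_mono (S T : nat -> Prop) N :
  (forall n, (1 <= n <= N)%nat -> S n -> T n) -> (count_upto S N <= count_upto T N)%nat.
Proof.
  induction N; intros H; cbn [count_upto]; [lia|].
  assert (IH : (count_upto S N <= count_upto T N)%nat) by (apply IHN; intros; apply H; [lia|auto]).
  destruct (excluded_middle_informative (S (Datatypes.S N))) as [a|a];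
  destruct (excluded_middle_informative (T (Datatypes.S N))) as [b|b]; try lia.
  exfalso. apply b. apply H; [lia|exact a].
Qed.

Lemma count_or (S T : nat -> Prop) N :
  (count_upto (fun n => S n \/ T n) N <= count_upto S N + count_upto T N)%nat.
Proof.
  induction N; cbn [count_upto]; [lia|].
  destruct (excluded_middle_informative (S (Datatypes.S N) \/ T (Datatypes.S N))) as [a|a];
  destruct (excluded_middle_informative (S (Datatypes.S N))) as [b|b];
  destruct (excluded_middle_informative (T (Datatypes.S N))) as [c|c]; try lia.
  tauto.
Qed.

Lemma count_int a b N :
  (count_upto (fun n => a <= n < b)%nat N <= N + 1 - a /\
   count_upto (fun n => a <= n < b)%nat N <= b - a)%nat.
Proof.
  induction N; cbn [count_upto]; [lia|].
  destruct (excluded_middle_informative (a <= Datatypes.S N < b)%nat); lia.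
Qed.

Lemma count_ge (S : nat -> Prop) m N :
  (forall n, (m < n <= N)%nat -> S n) -> (N - m <= count_upto S N)%nat.
Proof.
  induction N; intros H; cbn [count_upto]; [lia|].
  assert (IH : (N - m <= count_upto S N)%nat) by (apply IHN; intros; apply H; lia).
  destruct (excluded_middle_informative (S (Datatypes.S N))) as [a|a]; [lia|].
  destruct (Nat.le_gt_cases (Datatypes.S N) m); [lia|].
  exfalso; apply a; apply H; lia.
Qed.

Lemma count_le (S : nat -> Prop) N : (count_upto S N <= N)%nat.
Proof.
  induction N; cbn [count_upto]; [lia|].
  destruct (excluded_middle_informative (S (Datatypes.S N))); lia.
Qed.

Lemma count_Q K e N :
  (count_upto (fun n => exists j, (j <= e)%nat /\ (K * 2^j <= n < K * 2^j + 2^j)%nat) N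
    <= 2^(Datatypes.S e))%nat.
Proof.
  induction e.
  - eapply Nat.le_trans.
    + apply (count_mono _ (fun n => K*2^0 <= n < K*2^0 + 2^0)%nat).
      intros n _ [j [Hj H]]. assert (j = 0)%nat by lia. subst j. exact H.
    + pose proof (count_int (K*2^0) (K*2^0+2^0) N). simpl in *. lia.
  - eapply Nat.le_trans.
    + apply (count_mono _ (fun n => (exists j, (j <= e)%nat /\ (K * 2^j <= n < K * 2^j + 2^j)%nat)
           \/ (K*2^(Datatypes.S e) <= n < K*2^(Datatypes.S e) + 2^(Datatypes.S e))%nat)).
      intros n _ [j [Hj H]].
      destruct (Nat.le_gt_cases j e) as [h|h]; [left; exists j; auto|].
      right. assert (j = Datatypes.S e) by lia. subst j. exact H.
    + eapply Nat.le_trans; [apply count_or|].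
      pose proof (count_int (K*2^(Datatypes.S e)) (K*2^(Datatypes.S e)+2^(Datatypes.S e)) N).
      change (2^(Datatypes.S (Datatypes.S e)))%nat with (2 * 2^(Datatypes.S e))%nat.
      lia.
Qed.

Lemma count_check k : (count_upto Aset (KK k ^ 3) <= 6 * KK k + 1)%nat.
Proof.
  destruct (stage_props k) as [h1 [h2 h3]].
  eapply Nat.le_trans.
  - apply (count_mono _ (fun n => ((0 <= n < WW k + 1)%nat \/ (WW k+1 <= n < 4*KK k+1)%nat) \/
        (exists j, (j <= ee k)%nat /\ (KK k * 2^j <= n < KK k * 2^j + 2^j)%nat))).
    intros n Hn HA.
    destruct HA as [H|[k' Hk']].
    + left; left. lia.
    + pose proof (stage_elems k' n Hk') as E.
      destruct (Nat.lt_trichotomy k' k) as [c|[c|c]].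
      * left; left. pose proof (WW_mono (Datatypes.S k') k c). lia.
      * subst k'. destruct Hk' as [H|H]; [left; right; lia | right; exact H].
      * exfalso. pose proof (WW_mono (Datatypes.S k) k' c). rewrite WW_S in *.
        rewrite K3 in Hn. lia.
  - eapply Nat.le_trans; [apply count_or|].
    eapply Nat.le_trans; [apply Nat.add_le_mono; [apply count_or|apply Nat.le_refl]|].
    pose proof (count_int 0 (WW k+1) (KK k^3)). pose proof (count_int (WW k+1) (4*KK k+1) (KK k^3)).
    pose proof (count_Q (KK k) (ee k) (KK k^3)).
    replace (2^(Datatypes.S (ee k)))%nat with (2*KK k)%nat in * by (unfold KK; simpl; lia).
    lia.
Qed.
Open Scope R_scope.

Lemma floor_props x : 0 <= x ->
  INR (Z.to_nat (Int_part x)) <= x < INR (Z.to_nat (Int_part x)) + 1.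
Proof.
  intros Hx. destruct (base_Int_part x) as [h1 h2].
  assert (Hz : (0 <= Int_part x)%Z).
  { assert (IZR (-1) < IZR (Int_part x)) by lra.
    apply lt_IZR in H. lia. }
  rewrite INR_IZR_INZ, Z2Nat.id by exact Hz. lra.
Qed.

Lemma density : has_density_one (prodsumset Aset).
Proof.
  unfold has_density_one. apply is_lim_spec. intros eps.
  exists (Rmax 4 (8 / eps)). intros x Hx.
  pose proof (Rmax_l 4 (8/eps)). pose proof (Rmax_r 4 (8/eps)).
  pose proof (cond_pos eps) as Heps.
  assert (Hx4 : 4 < x) by lra.
  destruct (floor_props x ltac:(lra)) as [f1 f2].
  unfold counting. set (n := Z.to_nat (Int_part x)) in *.
  pose proof (count_le (prodsumset Aset) n) as c1.
  pose proof (count_ge (prodsumset Aset) 3 n ltac:(intros; apply cover_all; lia)) as c2.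
  set (c := count_upto (prodsumset Aset) n) in *.
  apply le_INR in c1.
  assert (c2' : INR n - 3 <= INR c).
  { destruct (le_lt_dec 3 n) as [h|h].
    - rewrite <- (Nat.sub_add 3 n h) at 1. apply le_INR in c2. rewrite plus_INR in *. simpl in *. lra.
    - pose proof (pos_INR c). apply lt_INR in h. simpl in h. lra. }
  assert (Hx8 : 8 / eps < x) by lra.
  assert (Hxe : 8 < eps * x).
  { apply Rmult_lt_compat_l with (r := eps) in Hx8; [|lra].
    unfold Rdiv in Hx8. rewrite <- Rmult_assoc, (Rmult_comm eps 8), Rmult_assoc, Rinv_r in Hx8; lra. }
  rewrite Rabs_left1.
  - apply Rmult_lt_reg_r with x; [lra|].
    replace (- (INR c / x - 1) * x) with (x - INR c) by (field; lra). lra.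
  - apply Rle_minus. apply Rmult_le_reg_r with x; [lra|].
    replace (INR c / x * x) with (INR c) by (field; lra). lra.
Qed.

Theorem theorem1p3 (phi : R -> R)
  (phi_pos : forall x, 0 < phi x)
  (phi_incr : forall x y, x <= y -> phi x <= phi y)
  (phi_inf : is_lim phi p_infty p_infty) :
  exists A : nat -> Prop,
    (forall n, A n -> (1 <= n)%nat) /\
    has_density_one (prodsumset A) /\
    exists C : R, forall X0 : R, exists X : R,
      X0 <= X /\ 0 < X /\
      counting A X / Rpower (X * phi X) (1/3) <= C.
Proof.
  exists Aset. split; [exact Aset_pos|]. split; [exact density|].
  set (P0 := Rpower (phi 0) (1/3)).
  assert (HP0 : 0 < P0) by (unfold P0, Rpower; apply exp_pos).
  exists (7 / P0). intros X0.
  destruct (archimed X0) as [a1 a2].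
  set (k := Z.to_nat (up X0)).
  assert (Hk : X0 <= INR k).
  { unfold k. destruct (Z_le_gt_dec 0 (up X0)) as [h|h].
    - rewrite INR_IZR_INZ, Z2Nat.id by exact h. lra.
    - pose proof (pos_INR (Z.to_nat (up X0))). apply Z.gt_lt in h. apply IZR_lt in h. lra. }
  set (K := KK k).
  pose proof (KK_ge k) as HK16. fold K in HK16.
  pose proof (KK_lin k) as HKl. fold K in HKl.
  assert (HKpos : 0 < INR K) by (apply lt_0_INR; lia).
  exists (INR (K ^ 3)).
  assert (HX : INR K <= INR (K^3)).
  { apply le_INR. unfold K. rewrite K3. pose proof (KK_ge k). nia. }
  apply le_INR in HKl.
  split; [lra|]. split; [lra|].
  unfold counting. rewrite Int_part_INR, Nat2Z.id.
  pose proof (count_check k) as Hc. fold K in Hc.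
  set (c := count_upto Aset (K^3)) in *.
  assert (Hc7 : INR c <= 7 * INR K).
  { apply le_INR in Hc. rewrite plus_INR, mult_INR in Hc. simpl in Hc.
    assert (1 <= INR K) by (apply (le_INR 1); lia). lra. }
  set (Ph := phi (INR (K^3))).
  assert (HPh : 0 < Ph) by apply phi_pos.
  set (P := Rpower Ph (1/3)).
  assert (HPP : P0 <= P).
  { unfold P, P0. apply Rle_Rpower_l; [lra|]. split; [apply phi_pos|].
    apply phi_incr. apply pos_INR. }
  assert (EX : Rpower (INR (K^3)) (1/3) = INR K).
  { rewrite pow_INR. rewrite <- Rpower_pow by exact HKpos.
    rewrite Rpower_mult. replace (INR 3 * (1/3)) with 1 by (simpl; field).
    apply Rpower_1; exact HKpos. }
  rewrite <- Rpower_mult_distr by lra. rewrite EX. fold P.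
  assert (HP : 0 < P) by lra.
  apply Rle_trans with (7 / P).
  - apply Rmult_le_reg_r with (INR K * P); [apply Rmult_lt_0_compat; lra|].
    replace (INR c / (INR K * P) * (INR K * P)) with (INR c) by (field; lra).
    replace (7 / P * (INR K * P)) with (7 * INR K) by (field; lra). lra.
  - unfold Rdiv. apply Rmult_le_compat_l; [lra|]. apply Rinv_le_contravar; lra.
Qed.
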